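(* Let $\epsilon\in(0,1)$ and $x\in[0,1/2)$, and consider the iterated map $p\mapsto 2p^2(1-\epsilon)^2+4px\epsilon(1-\epsilon)+2x^2\epsilon^2$. For every initial value $p\in[0,1/2]$, the iterates converge to the fixed point $$p^*=\frac{1-4x\epsilon(1-\epsilon)-\sqrt{1-8\epsilon x(1-\epsilon)}}{4(1-\epsilon)^2},$$ and $p^*\le\epsilon$. *)

(* Defs.v *)
From HB Require Import structures.
From mathcomp Require Import all_boot all_order all_algebra.
From mathcomp Require Import all_classical all_reals.
From mathcomp Require Import topology normedtype sequences.
Set Implicit Arguments. Unset Strict Implicit. Unset Printing Implicit Defensive.
Import Order.TTheory GRing.Theory Num.Theory.
Local Open Scope ring_scope.

Definition selfmap {R : realType} (e x : R) (p : R) : R :=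
  2 * p ^+ 2 * (1 - e) ^+ 2 + 4 * p * x * e * (1 - e) + 2 * x ^+ 2 * e ^+ 2.

Definition pstar {R : realType} (e x : R) : R :=
  (1 - 4 * x * e * (1 - e) - Num.sqrt (1 - 8 * e * x * (1 - e)))
  / (4 * (1 - e) ^+ 2).

(* Main.v *)
Require Import Defs.
From HB Require Import structures.
From mathcomp Require Import all_boot all_order all_algebra.
From mathcomp Require Import all_classical all_reals.
From mathcomp Require Import topology normedtype sequences.
From mathcomp Require Import ring lra.
Import Order.TTheory GRing.Theory Num.Theory.
Import numFieldNormedType.Exports.
Local Open Scope classical_set_scope.
Local Open Scope ring_scope.

Theorem mainTheorem10 (R : realType) (e x : R)
  (he0 : 0 < e) (he1 : e < 1) (hx0 : 0 <= x) (hx1 : x < 1 / 2) :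
  (forall p : R, 0 <= p -> p <= 1 / 2 ->
     (fun n : nat => iter n (selfmap e x) p) @ \oo --> pstar e x)
  /\ pstar e x <= e.
Proof.
set a := 1 - e. set b := x * e.
have ha : 0 < a by rewrite /a; lra.
have hb : 0 <= b by rewrite /b; nra.
have hab : a * b * 8 < 1.
  have h1 : e * a <= 1/4 by rewrite /a; have := sqr_ge0 (e - 1/2); lra.
  have h2 : x * (e * a) <= x * (1/4) by apply: ler_wpM2l.
  have -> : a * b * 8 = 8 * (x * (e * a)) by rewrite /b; ring.
  lra.
have hfE : forall p, selfmap e x p = 2 * (a * p + b) ^+ 2.
  by move=> p; rewrite /selfmap /a /b; ring.
set D := 1 - 8 * e * x * (1 - e).
have hD : D = 1 - 8 * a * b by rewrite /D /a /b; ring.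
have hD0 : 0 <= D by rewrite hD; lra.
set s := Num.sqrt D.
have hs0 : 0 <= s by apply: sqrtr_ge0.
have hs2 : s ^+ 2 = D by rewrite sqr_sqrtr.
have hs1 : 0 < s by rewrite sqrtr_gt0 hD; lra.
set P := pstar e x.
have hP : P * (4 * a ^+ 2) = 1 - 4 * a * b - s.
  rewrite /P /pstar -/s -/D -/a.
  have -> : 4 * x * e * a = 4 * a * b by rewrite /b; ring.
  rewrite mulfVK //; apply/eqP => h; have : 4 * a ^+ 2 > 0 by nra.
  by rewrite h ltxx.
set q := a * P + b.
have hq : 4 * a * q = 1 - s by rewrite /q; lra.
have hq0 : 0 <= q by nra.
have hq1 : 4 * a * q < 1 by lra.
have hPq : P = 2 * q ^+ 2.
  have h1 : (4 * a * q) ^+ 2 = (1 - s) ^+ 2 by rewrite hq.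
  have h2 : 8 * a ^+ 2 * (2 * q ^+ 2 - P) = 0.
    rewrite /q in h1 *. rewrite hD in hs2. nra.
  have h3 : 8 * a ^+ 2 != 0 by rewrite lt0r_neq0 //; nra.
  move/eqP: h2; rewrite mulf_eq0 (negbTE h3) /= subr_eq0 => /eqP ->.
  by [].
have hP0 : 0 <= P by rewrite hPq; nra.
set k := fun p => 2 * a * (a * p + b + q).
have hkey : forall p, selfmap e x p - P = (p - P) * k p.
  move=> p; rewrite hfE /k /=; move: hPq; rewrite /q => hPq'; lra.
have hf12 : selfmap e x (1/2) < 1/2.
  rewrite hfE.
  have h : a * (1/2) + b < 1/2 by rewrite /a /b; nra.
  have h' : 0 <= a * (1/2) + b by nra.
  nra.
have hPlt : P < 1/2.
  rewrite ltNge; apply/negP => hge.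
  have hk : k (1/2) < 1 by rewrite /k /q; nra.
  have := hkey (1/2). nra.
set c := k (1/2).
have hc1 : c < 1 by have := hkey (1/2); rewrite -/c; nra.
have hc0 : 0 <= c by rewrite /c /k; nra.
split.
  move=> p hp0 hp1.
  have hinv : forall n, 0 <= iter n (selfmap e x) p <= 1/2.
    elim=> [|n IH] /=; first by rewrite hp0 hp1.
    move: IH => /andP [h0 h1]; apply/andP; split.
      by rewrite hfE mulr_ge0 // sqr_ge0.
    move: h0 h1; set y := iter n (selfmap e x) p => h0 h1.
    have hm : 0 <= (a*(1/2)+b - (a*y+b)) * (a*(1/2)+b + (a*y+b)).
      have hy : a * y <= a * (1/2) by apply: ler_wpM2l; lra.
      have hy0 : 0 <= a * y by apply: mulr_ge0; lra.
      apply: mulr_ge0; lra.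
    move: hf12; rewrite !hfE; nra.
  have hbound : forall n, `|iter n (selfmap e x) p - P| <= c ^+ n * `|p - P|.
    elim=> [|n IH] /=; first by rewrite expr0 mul1r.
    rewrite hkey normrM exprS -mulrA.
    move: (hinv n) => /andP [h0 h1].
    have hk0 : 0 <= k (iter n (selfmap e x) p) by rewrite /k; nra.
    have hkc : k (iter n (selfmap e x) p) <= c by rewrite /c /k; nra.
    rewrite (ger0_norm hk0) mulrC.
    exact: ler_pM hk0 (normr_ge0 _) hkc IH.
  have hg : geometric `|p - P| c n @[n --> \oo] --> 0.
    by apply: cvg_geometric; rewrite ger0_norm.
  apply: (@squeeze_cvgr _ _ _ _ (fun n => P - geometric `|p - P| c n)
                              (fun n => P + geometric `|p - P| c n)).
  - near=> n; have := hbound n; rewrite /geometric /= mulrC.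
    move=> /ler_normlP [h1 h2]; apply/andP; split; lra.
  - by rewrite -[X in _ --> X]subr0; apply: cvgB => //; exact: cvg_cst.
  - by rewrite -[X in _ --> X]addr0; apply: cvgD => //; exact: cvg_cst.
rewrite leNgt; apply/negP => hlt.
have hke : k e < 1 by rewrite /k /q; nra.
have h1 : selfmap e x e - e > 0.
  have := hkey e. nra.
have h2 : selfmap e x e < e.
  rewrite hfE.
  have hu : 0 <= 1 - e + x by lra.
  have hu2 : 1 - e + x < 3/2 - e by lra.
  have hcub : 2 * e * (3/2 - e) ^+ 2 <= 1.
    have : 0 <= (e - 1/2) ^+ 2 * (4 - 2 * e) by apply: mulr_ge0; nra.
    nra.
  have -> : a * e + b = e * (1 - e + x) by rewrite /a /b; ring.
  have hs : (1 - e + x) ^+ 2 < (3/2 - e) ^+ 2 by nra.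
  have hm : (2 * e ^+ 2) * (1 - e + x) ^+ 2 < (2 * e ^+ 2) * (3/2 - e) ^+ 2.
    by rewrite ltr_pM2l //; nra.
  have he2 : e * (2 * e * (3/2 - e) ^+ 2) <= e * 1 by rewrite ler_pM2l.
  have -> : 2 * (e * (1 - e + x)) ^+ 2 = (2 * e ^+ 2) * (1 - e + x) ^+ 2 by ring.
  have : (2 * e ^+ 2) * (3/2 - e) ^+ 2 = e * (2 * e * (3/2 - e) ^+ 2) by ring.
  lra.
lra.
Unshelve. all: by end_near.
Qed.
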